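(* Let $0\neq g\in L^2(\mathbb{R})$ be a real-valued function. Suppose that $(a,b)\in\mathbb{R}^2$ is such that $\mathcal{G}(g,\Lambda_0)$ is linearly independent in $L^2(\mathbb{R})$, where $\Lambda_0=\{(0,0),(0,1),(0,-1),(a,b),(a,-b)\}$. Then for every $0\neq c\in\mathbb{R}$, the set $\mathcal{G}(g,\Lambda)$ is linearly independent in $L^2(\mathbb{R})$, where $\Lambda=\{(0,0),(0,1),(c,0),(a,b)\}$.
   Context: For $a,b\in\mathbb{R}$ and a function $f$ on $\mathbb{R}$, the translation operator is $T_af(x)=f(x-a)$ and the modulation operator is $M_bf(x)=e^{2\pi i bx}f(x)$. For $g\in L^2(\mathbb{R})$ and a finite set $\Lambda=\{(a_k,b_k)\}_{k=1}^N\subset\mathbb{R}^2$, $\mathcal{G}(g,\Lambda)=\{M_{b_k}T_{a_k}g\}_{k=1}^N=\{e^{2\pi i b_k x}g(x-a_k): k=1,\dots,N\}$. Linear independence means: if $c_1,\dots,c_N\in\mathbb{C}$ satisfy $\sum_{k=1}^N c_k e^{2\pi i b_k x}g(x-a_k)=0$ for almost every $x\in\mathbb{R}$, then $c_1=\dots=c_N=0$. *)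

(* Defs.v *)
From HB Require Import structures.
From mathcomp Require Import all_boot all_order all_algebra.
From mathcomp Require Import all_classical all_reals all_analysis.
From mathcomp Require Import complex.
Set Implicit Arguments. Unset Strict Implicit. Unset Printing Implicit Defensive.
Import Order.TTheory GRing.Theory Num.Theory.
Local Open Scope ring_scope.

Definition expi {R : realType} (t : R) : R[i] := Complex (cos t) (sin t).

(* The time-frequency shift  M_b T_a g (x) = e^{2 pi i b x} g(x - a),
   viewed as a complex-valued function. *)
Definition TFshift {R : realType} (g : R -> R) (p : R * R) : R -> R[i] :=
  fun x => expi (2 * pi * p.2 * x) * ((g (x - p.1))%:C)%C.

Definition L2fun {R : realType} (g : R -> R) : Prop :=
  measurable_fun [set: R] g /\
  (@lebesgue_measure R).-integrable [set: R] (fun x => ((g x) ^+ 2)%:E).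

Definition nonzero_ae {R : realType} (g : R -> R) : Prop :=
  ~ {ae (@lebesgue_measure R), forall x, g x = 0}.

Definition gabor_lin_indep {R : realType} (g : R -> R) (L : seq (R * R)) : Prop :=
  forall c : 'I_(size L) -> R[i],
    {ae (@lebesgue_measure R), forall x,
       \sum_(k < size L) c k * TFshift g (nth (0, 0) L k) x = 0} ->
    forall k, c k = 0.

(* Main.v *)
Require Import Defs.
From HB Require Import structures.
From mathcomp Require Import all_boot all_order all_algebra.
From mathcomp Require Import all_classical all_reals all_analysis.
From mathcomp Require Import complex.
From mathcomp Require Import measurable_realfun lra ring.
Import Order.TTheory GRing.Theory Num.Theory.
Local Open Scope ring_scope.

Section S.
Local Open Scope classical_set_scope.
Context {R : realType}.
Local Notation mu := (@lebesgue_measure R).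

Lemma shift_mfun (t : R) : measurable_fun [set: R] (fun x : R => x + t).
Proof. exact: measurable_funD. Qed.

Lemma lebesgue_measure_shift (t : R) (A : set R) : measurable A ->
  mu ((fun x => x + t) @^-1` A) = mu A.
Proof.
move=> mA.
change (pushforward mu (fun x : R => (x + t : measurableTypeR R)) A = mu A).
apply/esym/lebesgue_measure_unique => //.
all: try exact: shift_mfun.
move=> mf _ [[a b]] _ <-.
rewrite /pushforward /=.
have E : (fun x => x + t) @^-1` `]a, b] = `](a - t), (b - t)]%classic.
  by apply/seteqP; split => x /=; rewrite !in_itv /= => /andP[h1 h2]; apply/andP; split; lra.
transitivity (mu ((fun x => x + t) @^-1` `]a, b])); last by [].
rewrite E !lebesgue_measure_itv/= !lte_fin ltrD2r.
by rewrite -!EFinD opprB addrA subrK.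
Qed.

Lemma ae_shift (t : R) (P : R -> Prop) :
  {ae mu, forall x, P x} -> {ae mu, forall x, P (x + t)}.
Proof.
case=> A [mA A0 PA].
exists ((fun x => x + t) @^-1` A); split.
- by rewrite -[X in measurable X]setTI; apply: shift_mfun.
- by rewrite lebesgue_measure_shift.
- by move=> x /= nP; apply: PA.
Qed.

Lemma integral_shift (t : R) (f : R -> \bar R) :
  measurable_fun [set: R] f -> (forall x, (0 <= f x)%E) ->
  (\int[mu]_x f (x + t)%R = \int[mu]_x f x)%E.
Proof.
move=> mf f0.
have := @ge0_integral_pushforward _ _ (measurableTypeR R) (measurableTypeR R) R (fun x => x + t) (shift_mfun t) mu setT f
  measurableT mf (fun y _ => f0 y).
rewrite preimage_setT /= => <-.
apply: eq_measure_integral; first exact: shift_mfun.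
move=> mf2 A mA _.
exact: (@lebesgue_measure_shift t A mA).
Qed.


Lemma aeS (P Q : R -> Prop) : (forall x, P x -> Q x) ->
  {ae mu, forall x, P x} -> {ae mu, forall x, Q x}.
Proof.
move=> PQ [A [mA A0 PA]]; exists A; split => // x /= nQ.
by apply: PA => /= /PQ.
Qed.

Lemma aeS2 (P Q S : R -> Prop) : (forall x, P x -> Q x -> S x) ->
  {ae mu, forall x, P x} -> {ae mu, forall x, Q x} -> {ae mu, forall x, S x}.
Proof.
move=> PQ [A [mA A0 PA]] [B [mB B0 QB]]; exists (A `|` B); split.
- exact: measurableU.
- apply/eqP; rewrite eq_le measure_ge0 andbT.
  have E : (mu A + mu B = 0)%E by rewrite A0 B0 adde0.
  apply: le_trans (measureU2 _ mA mB) _.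
  by change (mu A + mu B <= 0)%E; rewrite E.
- move=> x /= nS; have [Px|nP] := pselect (P x); last by left; apply: PA.
  have [Qx|nQ] := pselect (Q x); last by right; apply: QB.
  by exfalso; apply: nS; apply: PQ.
Qed.

Lemma fin_cancel (a b : \bar R) : a \is a fin_num -> a = (a + b)%E -> b = 0%E.
Proof.
move=> af E.
have -> : b = ((a + b) - a)%E by rewrite [(a + b)%E]addeC addeK.
by rewrite -E subee.
Qed.

Lemma periodic_zero (h : R -> R) (c : R) :
  measurable_fun setT h -> (forall x, 0 <= h x) ->
  (\int[mu]_x (h x)%:E < +oo)%E -> 0 < c ->
  {ae mu, forall x, h (x - c) = h x} -> {ae mu, forall x, h x = 0}.
Proof.
move=> mh h0 hfin c0 hper.
pose w := fun x : R => atan x + pi / 2.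
have w0 x : 0 < w x by rewrite /w; have := atan_gtNpi2 x; lra.
have wle x : w x <= pi by rewrite /w; have := atan_ltpi2 x; lra.
have wlt x : w x < w (x + c).
  by rewrite /w ltrD2r; apply: lt_atan; lra.
have mw : measurable_fun setT w.
  apply: measurable_funD; last exact: measurable_cst.
  by apply: continuous_measurable_fun => x; exact: continuous_atan.
have mwc : measurable_fun setT (fun x : R => w (x + c)).
  by apply: (measurableT_comp mw); exact: shift_mfun.
have mhc : measurable_fun setT (fun x : R => h (x - c)).
  by apply: (measurableT_comp mh); exact: shift_mfun.
have E1 : (\int[mu]_x (h x * w (x + c))%:E = \int[mu]_x (h x * w x)%:E)%E.
  transitivity (\int[mu]_x (h ((x + c) - c) * w (x + c))%:E)%E.
    by apply: eq_integral => x _; rewrite addrK.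
  rewrite (integral_shift c (fun y => (h (y - c) * w y)%:E)); first last.
  - by move=> y; rewrite lee_fin mulr_ge0 // ltW.
  - by apply/measurable_EFinP; exact: measurable_funM.
  apply: ge0_ae_eq_integral => //.
  - by apply/measurable_EFinP; exact: measurable_funM.
  - by apply/measurable_EFinP; exact: measurable_funM.
  - by move=> y _; rewrite lee_fin mulr_ge0 // ltW.
  - by move=> y _; rewrite lee_fin mulr_ge0 // ltW.
  - by apply: aeS hper => x /= -> _.
have E2 : (\int[mu]_x (h x * w (x + c))%:E = \int[mu]_x (h x * w x)%:E +
          \int[mu]_x (h x * (w (x + c) - w x))%:E)%E.
  rewrite -ge0_integralD //.
  - by apply: eq_integral => x _; rewrite -EFinD; congr EFin; ring.
  - by move=> y _; rewrite lee_fin mulr_ge0 // ltW.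
  - by apply/measurable_EFinP; exact: measurable_funM.
  - by move=> y _; rewrite lee_fin mulr_ge0 // subr_ge0 ltW.
  - by apply/measurable_EFinP; apply: measurable_funM => //; exact: measurable_funB.
have Gfin : (\int[mu]_x (h x * w x)%:E)%E \is a fin_num.
  rewrite ge0_fin_numE; last by apply: integral_ge0 => y _; rewrite lee_fin mulr_ge0 // ltW.
  apply: (le_lt_trans (y := (\int[mu]_x (pi * h x)%:E)%E)).
    apply: ge0_le_integral => //.
    - by move=> y _; rewrite lee_fin mulr_ge0 // ltW.
    - by apply/measurable_EFinP; exact: measurable_funM.
    - by apply/measurable_EFinP; apply: measurable_funM => //; exact: measurable_cst.
    - by move=> y _; rewrite lee_fin mulrC; apply: ler_wpM2r.
  under eq_integral do rewrite EFinM.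
  rewrite ge0_integralZl_EFin //; last exact: pi_ge0.
  - by rewrite lte_mul_pinfty // lee_fin pi_ge0.
  - by move=> y _; rewrite lee_fin.
  - exact/measurable_EFinP.
have D0 : (\int[mu]_x (h x * (w (x + c) - w x))%:E = 0)%E.
  by rewrite E1 in E2; exact: (fin_cancel _ _ Gfin E2).
have : ae_eq mu setT (fun x => (h x * (w (x + c) - w x))%:E) (cst 0%E).
  apply/ae_eq_integral_abs => //.
    by apply/measurable_EFinP; apply: measurable_funM => //; exact: measurable_funB.
  rewrite -D0; apply: eq_integral => x _; rewrite gee0_abs // lee_fin mulr_ge0 //.
  by rewrite subr_ge0 ltW.
apply: filterS => x /= /(_ I) [] /eqP; rewrite mulf_eq0 => /orP[/eqP //|].
by rewrite subr_eq0 => /eqP E; have := wlt x; rewrite E ltxx.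
Qed.

Lemma fin_fix (I : \bar R) (k : R) : I \is a fin_num -> I = (k%:E * I)%E -> k != 1 -> I = 0%E.
Proof.
case: I => // r _; rewrite -EFinM => E0 l1; congr EFin.
have E : r = k * r by case: E0.
have : r * (1 - k) = 0 by rewrite mulrBr mulr1 mulrC -E subrr.
move/eqP; rewrite mulf_eq0 subr_eq0 => /orP[/eqP //|].
by rewrite eq_sym (negbTE l1).
Qed.

Lemma shift_rel_zero (g : R -> R) (c l : R) :
  measurable_fun setT g -> (\int[mu]_x ((g x) ^+ 2)%:E < +oo)%E -> c != 0 ->
  {ae mu, forall x, g (x - c) = l * g x} -> {ae mu, forall x, g x = 0}.
Proof.
move=> mg gfin c0 rel.
pose h := fun x => g x ^+ 2.
have mh : measurable_fun setT h by exact: measurable_funX.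
have h0 x : 0 <= h x by rewrite /h sqr_ge0.
have hrel : {ae mu, forall x, h (x - c) = l ^+ 2 * h x}.
  by apply: aeS rel => x; rewrite /h => ->; rewrite exprMn.
suff : {ae mu, forall x, h x = 0}.
  by apply: aeS => x; rewrite /h => /eqP; rewrite sqrf_eq0 => /eqP.
have mhc : measurable_fun setT (fun x : R => h (x - c)).
  by apply: (measurableT_comp mh); exact: shift_mfun.
have E : (\int[mu]_x (h x)%:E = (l ^+ 2)%:E * \int[mu]_x (h x)%:E)%E.
  rewrite -{1}(integral_shift (- c) (fun x => (h x)%:E)) //; last first.
    exact/measurable_EFinP.
  rewrite -ge0_integralZl_EFin //; last by rewrite sqr_ge0.
  - apply: ge0_ae_eq_integral => //.
    + exact/measurable_EFinP.
    + by apply/measurable_EFinP; apply: measurable_funM => //; exact: measurable_cst.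
    + by move=> y _; rewrite lee_fin.
    + by move=> y _; rewrite lee_fin mulr_ge0 // sqr_ge0.
    + by apply: aeS hrel => x /= -> _; rewrite EFinM.
  - by move=> y _; rewrite lee_fin.
  - exact/measurable_EFinP.
have [l1|l1] := eqVneq (l ^+ 2) 1.
  have per : {ae mu, forall x, h (x - c) = h x}.
    by apply: aeS hrel => x ->; rewrite l1 mul1r.
  have hfin : (\int[mu]_x (h x)%:E < +oo)%E by [].
  have [cneg|cpos] := ltP c 0.
    apply: (periodic_zero _ (- c) mh h0 hfin); first by rewrite oppr_gt0.
    have := ae_shift c _ per.
    by apply: aeS => x; rewrite addrK opprK => ->.
  apply: (periodic_zero _ c mh h0 hfin) => //.
  by rewrite lt_neqAle eq_sym c0.
have Hfin : (\int[mu]_x (h x)%:E)%E \is a fin_num.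
  by rewrite ge0_fin_numE // integral_ge0 // => y _; rewrite lee_fin.
have H0 : (\int[mu]_x (h x)%:E = 0)%E.
  exact: (fin_fix _ _ Hfin E l1).
have : ae_eq mu setT (fun x => (h x)%:E) (cst 0%E).
  apply/ae_eq_integral_abs => //; first exact/measurable_EFinP.
  by rewrite -H0; apply: eq_integral => x _; rewrite gee0_abs // lee_fin.
by apply: aeS => x /(_ I) [].
Qed.
End S.

Section T.
Context {R : realType}.
Local Notation cj := (@conjc R).
Local Notation mu := (@lebesgue_measure R).

Lemma expi_conj (t : R) : cj (expi t) = expi (- t).
Proof. by rewrite /expi /conjc cosN sinN. Qed.

Lemma cjD (x y : R[i]) : cj (x + y) = cj x + cj y.
Proof. exact: rmorphD. Qed.
Lemma cjM (x y : R[i]) : cj (x * y) = cj x * cj y.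
Proof. exact: rmorphM. Qed.
Lemma cj0 : cj 0 = 0.
Proof. exact: conjc0. Qed.
Lemma cjR (x : R) : cj (x%:C)%C = (x%:C)%C.
Proof. exact: conjc_real. Qed.
Lemma cj_eq0 (x : R[i]) : (cj x == 0) = (x == 0).
Proof. exact: conjc_eq0. Qed.

Lemma expi0 : expi (0 : R) = 1.
Proof. by rewrite /expi cos0 sin0. Qed.

Lemma key (c0 c1 c2 c3 : R[i]) (G Gc Ga t s : R) :
  c0 * (G%:C)%C + c1 * (expi t * (G%:C)%C) + c2 * (Gc%:C)%C + c3 * (expi s * (Ga%:C)%C) = 0 ->
  (cj c2 * c0 - c2 * cj c0) * (G%:C)%C + cj c2 * c1 * (expi t * (G%:C)%C)
  + - (c2 * cj c1) * (expi (- t) * (G%:C)%C) + cj c2 * c3 * (expi s * (Ga%:C)%C)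
  + - (c2 * cj c3) * (expi (- s) * (Ga%:C)%C) = 0.
Proof.
move=> S.
have S' := congr1 cj S.
rewrite cj0 !cjD !cjM !cjR !expi_conj in S'.
have -> : (cj c2 * c0 - c2 * cj c0) * (G%:C)%C + cj c2 * c1 * (expi t * (G%:C)%C)
  + - (c2 * cj c1) * (expi (- t) * (G%:C)%C) + cj c2 * c3 * (expi s * (Ga%:C)%C)
  + - (c2 * cj c3) * (expi (- s) * (Ga%:C)%C) =
  cj c2 * (c0 * (G%:C)%C + c1 * (expi t * (G%:C)%C) + c2 * (Gc%:C)%C + c3 * (expi s * (Ga%:C)%C))
  - c2 * (cj c0 * (G%:C)%C + cj c1 * (expi (- t) * (G%:C)%C) + cj c2 * (Gc%:C)%C + cj c3 * (expi (- s) * (Ga%:C)%C)).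
  by ring.
by rewrite S S' !mulr0 subrr.
Qed.

Lemma sum4 (V : zmodType) (F : 'I_4 -> V) : \sum_(k < 4) F k =
  F (@Ordinal 4 0 isT) + F (@Ordinal 4 1 isT) + F (@Ordinal 4 2 isT) + F (@Ordinal 4 3 isT).
Proof.
rewrite !big_ord_recl big_ord0 addr0 !addrA.
by do ! (congr (_ + _)); congr F; apply: val_inj.
Qed.

Lemma sum5 (V : zmodType) (F : 'I_5 -> V) : \sum_(k < 5) F k =
  F (@Ordinal 5 0 isT) + F (@Ordinal 5 1 isT) + F (@Ordinal 5 2 isT) + F (@Ordinal 5 3 isT)
  + F (@Ordinal 5 4 isT).
Proof.
rewrite !big_ord_recl big_ord0 addr0 !addrA.
by do ! (congr (_ + _)); congr F; apply: val_inj.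
Qed.

Lemma extract_l (c0 c2 : R[i]) (g : R -> R) (c : R) : c2 != 0 ->
  {ae mu, forall x, c0 * ((g x)%:C)%C + c2 * ((g (x - c))%:C)%C = 0} ->
  exists l, {ae mu, forall x, g (x - c) = l * g x}.
Proof.
case: c0 => u v; case: c2 => p q => c2nz H.
have [p0|pn0] := eqVneq p 0.
  have qn0 : q != 0 by apply: contraNneq c2nz => q0; rewrite p0 q0.
  exists (- v / q); apply: aeS H => x [_ E2].
  move: E2; rewrite /= !(mul0r, mulr0, add0r, addr0, subr0) => E2.
  apply: (mulfI qn0).
  have -> : q * (- v / q * g x) = - v * g x by field.
  by apply/eqP; rewrite -subr_eq0; apply/eqP; rewrite -E2; ring.
exists (- u / p); apply: aeS H => x [E1 _].
move: E1; rewrite /= !(mul0r, mulr0, add0r, addr0, subr0) => E1.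
apply: (mulfI pn0).
have -> : p * (- u / p * g x) = - u * g x by field.
by apply/eqP; rewrite -subr_eq0; apply/eqP; rewrite -E1; ring.
Qed.

End T.

Theorem mainTheorem1 (R : realType) (g : R -> R) (a b : R) :
  L2fun g -> nonzero_ae g ->
  gabor_lin_indep g [:: (0, 0); (0, 1); (0, -1); (a, b); (a, - b)] ->
  forall c : R, c != 0 ->
  gabor_lin_indep g [:: (0, 0); (0, 1); (c, 0); (a, b)].
Proof.
move=> [mg ig] gnz Hind c cne0 coef Hae.
have ifin : (\int[lebesgue_measure]_x ((g x) ^+ 2)%:E < +oo)%E.
  move/integrableP: ig => [_].
  have -> // : (\int[lebesgue_measure]_x `|((g x) ^+ 2)%:E| =
      \int[lebesgue_measure]_x ((g x) ^+ 2)%:E)%E.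
  by apply: eq_integral => x _; rewrite gee0_abs // lee_fin sqr_ge0.
pose c0 := coef (@Ordinal 4 0 isT).
pose c1 := coef (@Ordinal 4 1 isT).
pose c2 := coef (@Ordinal 4 2 isT).
pose c3 := coef (@Ordinal 4 3 isT).
have Hae' : {ae lebesgue_measure, forall x,
    c0 * ((g x)%:C)%C + c1 * (expi (2 * pi * x) * ((g x)%:C)%C)
    + c2 * ((g (x - c))%:C)%C + c3 * (expi (2 * pi * b * x) * ((g (x - a))%:C)%C) = 0}.
  apply: aeS Hae => x <-; rewrite sum4 /TFshift /=.
  by rewrite !(mulr0, mul0r, mulr1, subr0, expi0, mul1r).
pose d : 'I_5 -> R[i] := fun k => nth 0 [:: conjc c2 * c0 - c2 * conjc c0;
  conjc c2 * c1; - (c2 * conjc c1); conjc c2 * c3; - (c2 * conjc c3)] k.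
have Hd := Hind d.
have {Hd} Hd : forall k, d k = 0.
  apply: Hd; apply: aeS Hae' => x H; rewrite sum5 /TFshift /d /=.
  rewrite !(mulr0, mul0r, mulr1, subr0, expi0, mul1r, mulrN1, mulrN, mulNr).
  by move: (key _ _ _ _ _ _ _ _ _ H); rewrite !mulNr.
have d1 : conjc c2 * c1 = 0 by exact: (Hd (@Ordinal 5 1 isT)).
have d3 : conjc c2 * c3 = 0 by exact: (Hd (@Ordinal 5 3 isT)).
have c2z : c2 = 0.
  apply/eqP/negPn/negP => c2nz.
  have c2nz' : conjc c2 != 0 by rewrite (cj_eq0 c2).
  have c1z : c1 = 0 by move/eqP: d1; rewrite mulf_eq0 (negbTE c2nz') => /eqP.
  have c3z : c3 = 0 by move/eqP: d3; rewrite mulf_eq0 (negbTE c2nz') => /eqP.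
  have rel : exists l, {ae lebesgue_measure, forall x, g (x - c) = l * g x}.
    apply: (extract_l c0 c2 g c c2nz).
    by apply: aeS Hae' => x; rewrite c1z c3z !mul0r !addr0.
  case: rel => l rel.
  by apply: gnz; exact: (shift_rel_zero _ _ _ mg ifin cne0 rel).
pose e : 'I_5 -> R[i] := fun k => nth 0 [:: c0; c1; 0; c3; 0] k.
have He : forall k, e k = 0.
  apply: Hind; apply: aeS Hae' => x H; rewrite sum5 /TFshift /e /=.
  rewrite !(mulr0, mul0r, mulr1, subr0, expi0, mul1r, mulrN1, mulrN, mulNr).
  by rewrite c2z mul0r addr0 in H; rewrite !addr0.
have c0z : c0 = 0 by exact: (He (@Ordinal 5 0 isT)).
have c1z : c1 = 0 by exact: (He (@Ordinal 5 1 isT)).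
have c3z : c3 = 0 by exact: (He (@Ordinal 5 3 isT)).
case=> [[|[|[|[|k]]]] hk] //.
- by rewrite -c0z /c0; congr coef; apply: val_inj.
- by rewrite -c1z /c1; congr coef; apply: val_inj.
- by rewrite -c2z /c2; congr coef; apply: val_inj.
- by rewrite -c3z /c3; congr coef; apply: val_inj.
Qed.
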